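(* Let $S\in\mathbb{R}_{\geq 0}^{[m]\times[N]}$ be a matrix with non-negative entries. Then \[\mathrm{rk}_+(S)=\min\{|\Gamma(\pi)| : \pi\in\mathrm{Prot}_+(S)\}.\]
   Context: $\mathrm{rk}_+(S)$ is the non-negative rank: the least $r$ such that $S=UW$ with $U\in\mathbb{R}_{\ge0}^{m\times r}$, $W\in\mathbb{R}_{\ge 0}^{r\times N}$. A Markovian protocol $\pi$ in $k\ge 1$ rounds between Alice (who receives an input $i\in[m]$) and Bob (who receives an input $j\in[N]$) is given by: finite sets $V_1,\dots,V_k$ of messages; a first speaker $D_1\in\{A,B\}$, the speakers alternating thereafter ($D_{t+1}\neq D_t$); for the first speaker an initial probability distribution $p^0_{D_1,z}$ on $V_1$ depending on his/her input $z$; for $1\le t\le k-1$, transition probabilities $p^{(t)}_{D_{t+1},z}(u_t,\cdot)$, a probability distribution on $V_{t+1}$ used by the party $D_{t+1}$ with input $z$ after receiving message $u_t$; and finally the party $D_{k+1}$ (the one who received $u_k$) claims an output $\omega\ge 0$ drawn from a distribution on $[0,\infty)$ depending only on his/her input and on $u_k$, with finite mean $\bar\omega_{D_{k+1},z}(u_k)$. (Protocols with either party as first speaker are allowed.) The average output on inputs $(i,j)$ is \[\mathbb{E}[\omega\mid i,j]=\sum_{(u_1,\dots,u_k)} p^0_{D_1,z_1}(u_1)\prod_{t=1}^{k-1}p^{(t)}_{D_{t+1},z_{t+1}}(u_t,u_{t+1})\,\bar\omega_{D_{k+1},z_{k+1}}(u_k),\] where $z_s=i$ if $D_s=A$ and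 $z_s=j$ if $D_s=B$. For $\gamma=(u_1,\dots,u_k)$, let $A_{i,\gamma}$ be the product of those factors in the summand for $\gamma$ belonging to Alice (i.e. depending on her input $i$) and $B_{\gamma,j}$ the product of the factors belonging to Bob, so the summand is $A_{i,\gamma}B_{\gamma,j}$. The protocol is correct for $S$ if for all $(i,j)$ the output is non-negative with probability $1$ and $\mathbb{E}[\omega\mid i,j]=S_{i,j}$; $\mathrm{Prot}_+(S)$ is the set of Markovian protocols correct for $S$. The width is $|\Gamma(\pi)|$, where $\Gamma(\pi)=\{\gamma\in V_1\times\cdots\times V_k : \exists i\in[m],\exists j\in[N],\ A_{i,\gamma}B_{\gamma,j}>0\}$. *)

(* Defs.v *)
From HB Require Import structures.
From mathcomp Require Import all_boot all_order all_algebra.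
From mathcomp Require Import all_classical all_reals all_analysis.
Set Implicit Arguments. Unset Strict Implicit. Unset Printing Implicit Defensive.
Import Order.TTheory GRing.Theory Num.Theory.
Local Open Scope classical_set_scope.
Local Open Scope ring_scope.

Section Defs.
Variable R : realType.

Definition nonneg_fact (m N : nat) (S : 'M[R]_(m, N)) (r : nat) : Prop :=
  exists (U : 'M[R]_(m, r)) (W : 'M[R]_(r, N)),
    [/\ (forall i k, 0 <= U i k), (forall k j, 0 <= W k j) & S = U *m W].

Lemma nonneg_fact_ex_asbool m N (S : 'M[R]_(m, N)) :
  (exists r, nonneg_fact S r) -> exists r, `[< nonneg_fact S r >].
Proof. by case=> r h; exists r; apply/asboolP. Qed.

(* rk_+(S): least r admitting a non-negative factorization S = U W
   (set to 0 when no such factorization exists, which never happens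
   for a non-negative S). *)
Definition nonneg_rank m N (S : 'M[R]_(m, N)) : nat :=
  match pselect (exists r, nonneg_fact S r) with
  | left e => ex_minn (nonneg_fact_ex_asbool e)
  | right _ => 0%N
  end.

(* Speaker of the 0-indexed step s (message u_{s+1} is sent at step s,
   the output is claimed at step k = K.+1); [af] = "Alice speaks first". *)
Definition isA (af : bool) (s : nat) : bool := if odd s then ~~ af else af.

Definition inp (m N : nat) (b : bool) : Type := if b then 'I_m else 'I_N.

Definition sel (m N : nat) (b : bool) (i : 'I_m) (j : 'I_N) : inp m N b :=
  if b as b0 return inp m N b0 then i else j.

(* k = K.+1 rounds; message set V_{t+1} = 'I_(n t) for t : 'I_K.+1. *)
Record protocol (m N K : nat) (n : 'I_K.+1 -> nat) (af : bool) := Protocol {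
  p_init : inp m N (isA af 0) -> 'I_(n ord0) -> R;
  p_trans : forall t : 'I_K, inp m N (isA af t.+1) ->
            'I_(n (widen_ord (leqnSn K) t)) -> 'I_(n (lift ord0 t)) -> R;
  p_out : inp m N (isA af K.+1) -> 'I_(n ord_max) -> probability R R
}.
Arguments p_init {m N K n af} _ _ _.
Arguments p_trans {m N K n af} _ _ _ _ _.
Arguments p_out {m N K n af} _ _ _.

Section Prot.
Variables (m N K : nat) (n : 'I_K.+1 -> nat) (af : bool).
Variable pi : @protocol m N K n af.

Definition mean (P : probability R R) : R := fine (\int[P]_x (x%:E))%E.

Definition wf_protocol : Prop :=
  [/\ (forall z u, 0 <= p_init pi z u),
      (forall z, \sum_u p_init pi z u = 1),
      (forall t z u v, 0 <= p_trans pi t z u v),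
      (forall t z u, \sum_v p_trans pi t z u v = 1) &
      (forall z u, p_out pi z u `[0, +oo[%classic = 1%E) /\
      (forall z u, (p_out pi z u).-integrable setT (fun x : R => x%:E))].

Definition path := {dffun forall t : 'I_K.+1, 'I_(n t)}.

Definition summand (i : 'I_m) (j : 'I_N) (g : path) : R :=
  p_init pi (sel (isA af 0) i j) (g ord0) *
  (\prod_(t < K) p_trans pi t (sel (isA af t.+1) i j)
                   (g (widen_ord (leqnSn K) t)) (g (lift ord0 t))) *
  mean (p_out pi (sel (isA af K.+1) i j) (g ord_max)).

Definition expected_output (i : 'I_m) (j : 'I_N) : R :=
  \sum_(g : path) summand i j g.

Definition Gamma : {set path} :=
  [set g : path | [exists i : 'I_m, [exists j : 'I_N, 0 < summand i j g]]].

Definition width : nat := #|Gamma|.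

Definition correct (S : 'M[R]_(m, N)) : Prop :=
  wf_protocol /\ forall i j, expected_output i j = S i j.

End Prot.
End Defs.

(* Main.v *)
Require Import Defs.
From HB Require Import structures.
From mathcomp Require Import all_boot all_order all_algebra.
From mathcomp Require Import all_classical all_reals all_analysis.
From mathcomp Require Import measurable_realfun.
From mathcomp Require Import ring lra.
Import Order.TTheory GRing.Theory Num.Theory.
Local Open Scope ring_scope.
Set Implicit Arguments. Unset Strict Implicit. Unset Printing Implicit Defensive.

Lemma mean_ge0 (R : realType) (P : probability R R) :
  P `[0, +oo[%classic = 1%E -> P.-integrable setT (fun x : R => x%:E) ->
  0 <= mean P.
Proof.
move=> P1 Pi; rewrite /mean; apply: fine_ge0.
set A : set R := `[0, +oo[%classic.
have mA : measurable A by exact: measurable_itv.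
rewrite (@negligible_integral _ _ _ _ _ (~` A)) //.
- apply: integral_ge0 => x [_ /=] /contrapT.
  by rewrite /A /= in_itv /= andbT lee_fin.
- exact: measurableC.
- have := probability_setC P mA; rewrite P1 subee // => ->; done.
Qed.

Lemma mean_dirac (R : realType) (a : R) : mean (\d_a : probability R R) = a.
Proof.
rewrite /mean integral_dirac //= ?diracT ?mul1e //.
by rewrite indicT /= mul1r.
Qed.

Lemma dirac_integrable (R : realType) (a : R) :
  (\d_a : probability R R).-integrable setT (fun x : R => x%:E).
Proof.
apply/integrableP.
split; first by exact: EFin_measurable.
rewrite integral_dirac //=; last by apply: measurableT_comp => //; exact: EFin_measurable.
by rewrite diracT mul1e ltry.
Qed.

Section Part2.
Variables (R : realType) (m N K : nat) (n : 'I_K.+1 -> nat) (af : bool).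
Variable pi : protocol R m N n af.

Definition Ap (b : bool) : (inp m N b -> R) -> 'I_m -> R :=
  if b as b0 return (inp m N b0 -> R) -> 'I_m -> R
  then fun P i => P i else fun _ _ => 1.
Definition Bp (b : bool) : (inp m N b -> R) -> 'I_N -> R :=
  if b as b0 return (inp m N b0 -> R) -> 'I_N -> R
  then fun _ _ => 1 else fun P j => P j.

Lemma ApBp b (P : inp m N b -> R) i j : P (sel b i j) = Ap P i * Bp P j.
Proof. by case: b P => P /=; rewrite ?mulr1 ?mul1r. Qed.

Lemma Ap_ge0 b (P : inp m N b -> R) i : (forall z, 0 <= P z) -> 0 <= Ap P i.
Proof. by case: b P => P /= H. Qed.
Lemma Bp_ge0 b (P : inp m N b -> R) j : (forall z, 0 <= P z) -> 0 <= Bp P j.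
Proof. by case: b P => P /= H. Qed.

Definition UA (i : 'I_m) (g : Defs.path n) : R :=
  Ap (fun z => p_init pi z (g ord0)) i *
  (\prod_(t < K) Ap (fun z => p_trans pi (t:=t) z (g (widen_ord (leqnSn K) t)) (g (lift ord0 t))) i) *
  Ap (fun z => mean (p_out pi z (g ord_max))) i.
Definition WB (g : Defs.path n) (j : 'I_N) : R :=
  Bp (fun z => p_init pi z (g ord0)) j *
  (\prod_(t < K) Bp (fun z => p_trans pi (t:=t) z (g (widen_ord (leqnSn K) t)) (g (lift ord0 t))) j) *
  Bp (fun z => mean (p_out pi z (g ord_max))) j.

Lemma summandE i j g : summand pi i j g = UA i g * WB g j.
Proof.
rewrite /summand /UA /WB.
rewrite (ApBp (fun z => p_init pi z (g ord0))).
rewrite (ApBp (fun z => mean (p_out pi z (g ord_max)))).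
under eq_bigr => t _ do rewrite (ApBp (fun z => p_trans pi (t:=t) z (g (widen_ord (leqnSn K) t)) (g (lift ord0 t)))).
rewrite big_split /=.
set a := Ap _ i; set b := Bp _ j; set c := Ap _ i; set d := Bp _ j.
ring.
Qed.

Hypothesis wf : wf_protocol pi.

Lemma UA_ge0 i g : 0 <= UA i g.
Proof.
case: wf => h1 _ h3 _ [h5 h6].
rewrite /UA; apply: mulr_ge0; first apply: mulr_ge0.
- by apply: Ap_ge0.
- by apply: prodr_ge0 => t _; apply: Ap_ge0.
- by apply: Ap_ge0 => z; apply: mean_ge0.
Qed.

Lemma WB_ge0 g j : 0 <= WB g j.
Proof.
case: wf => h1 _ h3 _ [h5 h6].
rewrite /WB; apply: mulr_ge0; first apply: mulr_ge0.
- by apply: Bp_ge0.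
- by apply: prodr_ge0 => t _; apply: Bp_ge0.
- by apply: Bp_ge0 => z; apply: mean_ge0.
Qed.

Lemma summand_ge0 i j g : 0 <= summand pi i j g.
Proof. by rewrite summandE mulr_ge0 // ?UA_ge0 ?WB_ge0. Qed.

Lemma fact_width (S : 'M[R]_(m, N)) : correct pi S -> nonneg_fact S (width pi).
Proof.
case=> _ hc.
exists (\matrix_(i, k) UA i (enum_val k)), (\matrix_(k, j) WB (enum_val k) j).
split.
- by move=> i k; rewrite mxE UA_ge0.
- by move=> k j; rewrite mxE WB_ge0.
apply/matrixP => i j; rewrite -hc mxE /expected_output.
have -> : \sum_g summand pi i j g = \sum_(g in Gamma pi) summand pi i j g.
  rewrite [RHS]big_mkcond /=; apply: eq_bigr => g _.
  case: ifP => // hg; apply/eqP; rewrite eq_le summand_ge0 andbT leNgt.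
  apply/negP => hp; move/negP: hg; apply; rewrite inE.
  by apply/existsP; exists i; apply/existsP; exists j.
rewrite big_enum_val; apply: eq_bigr => k _; rewrite !mxE summandE //.
Qed.

End Part2.

Lemma rank_le (R : realType) m N (S : 'M[R]_(m, N)) r :
  nonneg_fact S r -> (nonneg_rank S <= r)%N.
Proof.
move=> h; rewrite /nonneg_rank; case: pselect => [e|ne]; last by [].
case: ex_minnP => k _ H; apply: H; exact/asboolP.
Qed.

Lemma rank_fact (R : realType) m N (S : 'M[R]_(m, N)) :
  (forall i j, 0 <= S i j) -> nonneg_fact S (nonneg_rank S).
Proof.
move=> hS; rewrite /nonneg_rank; case: pselect => [e|ne].
  by case: ex_minnP => k /asboolP.
exfalso; apply: ne; exists N; exists S, 1%:M; split => //.
- by move=> k j; rewrite mxE; case: eqP.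
- by rewrite mulmx1.
Qed.

Section Part1.
Variables (R : realType) (m N r : nat).
Variables (U0 : 'M[R]_(m, r)) (W0 : 'M[R]_(r, N)).
Hypotheses (hU : forall i k, 0 <= U0 i k) (hW : forall k j, 0 <= W0 k j).

Definition cc : R := 1 + \sum_i \sum_k U0 i k.
Definition rho (i : 'I_m) : R := \sum_k U0 i k.

Lemma rho_ge0 i : 0 <= rho i.
Proof. by apply: sumr_ge0 => k _. Qed.

Lemma rho_le i : rho i <= cc - 1.
Proof.
have -> : cc - 1 = \sum_i rho i by rewrite /cc /rho; ring.
rewrite (bigD1 i) //= lerDl; apply: sumr_ge0 => i' _; exact: rho_ge0.
Qed.

Lemma cc_gt0 : 0 < cc.
Proof.
have : 0 <= \sum_i rho i by apply: sumr_ge0 => i _; exact: rho_ge0.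
rewrite /cc /rho; lra.
Qed.

Definition nK : 'I_1 -> nat := fun _ => r.+1.

Definition pin (i : 'I_m) (u : 'I_r.+1) : R :=
  \sum_(k < r | (k : nat) == u) U0 i k / cc + ((u : nat) == r)%:R * (1 - rho i / cc).
Definition om (j : 'I_N) (u : 'I_r.+1) : R :=
  \sum_(k < r | (k : nat) == u) cc * W0 k j.

Definition prot : protocol R m N nK true :=
  @Protocol R m N 0 nK true (fun (i : 'I_m) (u : 'I_r.+1) => pin i u)
    (fun t _ _ _ => 0)
    (fun (j : 'I_N) (u : 'I_r.+1) => (\d_(om j u) : probability R R)).

End Part1.

Section Part1b.
Variables (R : realType) (m N r : nat).
Variables (U0 : 'M[R]_(m, r)) (W0 : 'M[R]_(r, N)).
Hypotheses (hU : forall i k, 0 <= U0 i k) (hW : forall k j, 0 <= W0 k j).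

Lemma sum_widen (F : 'I_r -> R) (k : 'I_r) :
  \sum_(k' < r | (k' : nat) == widen_ord (leqnSn r) k) F k' = F k.
Proof. by apply: big_pred1 => k' /=. Qed.

Lemma sum_max (F : 'I_r -> R) :
  \sum_(k' < r | (k' : nat) == (@ord_max r)) F k' = 0.
Proof. by apply: big_pred0 => k' /=; rewrite ltn_eqF. Qed.

Lemma pin_widen i k : pin U0 i (widen_ord (leqnSn r) k) = U0 i k / cc U0.
Proof. by rewrite /pin sum_widen /= ltn_eqF // mul0r addr0. Qed.
Lemma pin_max i : pin U0 i ord_max = 1 - rho U0 i / cc U0.
Proof. by rewrite /pin sum_max /= eqxx mul1r add0r. Qed.
Lemma om_widen j k : om U0 W0 j (widen_ord (leqnSn r) k) = cc U0 * W0 k j.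
Proof. by rewrite /om sum_widen. Qed.
Lemma om_max j : om U0 W0 j ord_max = 0.
Proof. by rewrite /om sum_max. Qed.

Lemma pin_ge0 i u : 0 <= pin U0 i u.
Proof.
have hc := cc_gt0 hU.
apply: addr_ge0.
  apply: sumr_ge0 => k _; apply: divr_ge0 => //; exact: ltW.
apply: mulr_ge0 => //; rewrite subr_ge0 ler_pdivrMr // mul1r.
have := rho_le hU i; lra.
Qed.

Lemma pin_sum i : \sum_u pin U0 i u = 1.
Proof.
have hc := cc_gt0 hU.
rewrite big_ord_recr /= pin_max.
under eq_bigr do rewrite pin_widen.
rewrite -mulr_suml -/(rho U0 i); ring.
Qed.

Lemma om_ge0 j u : 0 <= om U0 W0 j u.
Proof.
have hc := cc_gt0 hU.
by apply: sumr_ge0 => k _; apply: mulr_ge0 => //; exact: ltW.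
Qed.

End Part1b.

Section Part1c.
Variables (R : realType) (m N r : nat).
Variables (U0 : 'M[R]_(m, r)) (W0 : 'M[R]_(r, N)).
Hypotheses (hU : forall i k, 0 <= U0 i k) (hW : forall k j, 0 <= W0 k j).

Let pi := prot U0 W0.

Lemma prot_wf : wf_protocol pi.
Proof.
split.
- move=> z u; exact: pin_ge0.
- move=> z; exact: pin_sum.
- by case.
- by case.
split.
- move=> z u /=; rewrite diracE mem_set //= in_itv /= andbT.
  exact: om_ge0.
- move=> z u; exact: dirac_integrable.
Qed.

Lemma prot_summand i j (g : Defs.path (nK r)) :
  summand pi i j g = pin U0 i (g ord0) * om U0 W0 j (g ord0).
Proof.
rewrite /summand big_ord0 mulr1 /= mean_dirac.
by have -> : (@ord_max 0) = ord0 by apply/val_inj.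
Qed.

Definition hh (u : 'I_r.+1) : Defs.path (nK r) := [ffun _ => u].

Lemma hhK : cancel (fun g : Defs.path (nK r) => g ord0) hh.
Proof.
move=> g; apply/ffunP => t; rewrite ffunE.
by rewrite (ord1 t).
Qed.

Lemma hhK' : cancel hh (fun g : Defs.path (nK r) => g ord0).
Proof. by move=> u; rewrite /hh ffunE. Qed.

Lemma prot_expected i j : expected_output pi i j = (U0 *m W0) i j.
Proof.
rewrite /expected_output (reindex hh); last first.
  by exists (fun g : Defs.path (nK r) => g ord0) => [u _|g _]; rewrite ?hhK ?hhK'.
under eq_bigr do rewrite prot_summand hhK'.
rewrite big_ord_recr /= om_max mulr0 addr0 mxE.
apply: eq_bigr => k _; rewrite pin_widen om_widen.
have hc := cc_gt0 hU.
field; exact: lt0r_neq0.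
Qed.

Lemma prot_width : (width pi <= r)%N.
Proof.
rewrite /width.
have inj : injective (fun g : Defs.path (nK r) => g ord0) := can_inj hhK.
rewrite -(card_imset _ inj).
apply: (@leq_trans #|[set~ (@ord_max r)]|); last by rewrite cardsC1 card_ord.
apply: subset_leq_card; apply/fintype.subsetP => u /imsetP [g hg ->].
rewrite !inE; apply/negP => /eqP he.
move: hg; rewrite inE => /existsP [i /existsP [j]].
by rewrite prot_summand he om_max mulr0 ltxx.
Qed.

End Part1c.

Unset Implicit Arguments.
Set Strict Implicit.

Theorem proposition1 (R : realType) (m N : nat) (S : 'M[R]_(m, N))
  (hS : forall i j, 0 <= S i j) :
  (exists (K : nat) (n : 'I_K.+1 -> nat) (af : bool)
          (pi : @protocol R m N K n af),
      correct pi S /\ width pi = nonneg_rank S) /\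
  (forall (K : nat) (n : 'I_K.+1 -> nat) (af : bool)
          (pi : @protocol R m N K n af),
      correct pi S -> (nonneg_rank S <= width pi)%N).
Proof.
have P2 : forall (K : nat) (n : 'I_K.+1 -> nat) (af : bool)
          (pi : @protocol R m N K n af),
      correct pi S -> (nonneg_rank S <= width pi)%N.
  move=> K n af pi hc; apply: rank_le; apply: fact_width => //.
  by case: hc.
split => //.
have [U0 [W0 [hU hW hSUW]]] := rank_fact hS.
have hc : correct (prot U0 W0) S.
  split; first exact: prot_wf.
  by move=> i j; rewrite prot_expected //; move: hSUW => /matrixP ->.
exists 0%N, (nK (nonneg_rank S)), true, (prot U0 W0); split => //.
apply/eqP; rewrite eqn_leq P2 // andbT; exact: prot_width.
Qed.
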